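(* Let $k\ge\ell\ge\ell'\ge t\ge1$ be integers, let $\mathcal{F}\subseteq\{F\subseteq[k]:|F|\le\ell\}$ and $\mathcal{G}\subseteq\{G\subseteq[k]:|G|\le\ell'\}$ be non-empty cross $t$-intersecting families, and for $i\in[2]$ let $\omega_i:[0,k]\to\mathbb{R}_{\ge0}$ be non-increasing functions. Then $$\omega_1(\mathcal{F})+\omega_2(\mathcal{G})\le\max\Big\{\max_{a\in[t,\ell']}\{\omega_1(\mathcal{K}_k(a,\ell,t))+\omega_2(\mathcal{S}_k(a,\ell'))\},\ \max_{a\in[t,\ell]}\{\omega_1(\mathcal{S}_k(a,\ell))+\omega_2(\mathcal{K}_k(a,\ell',t))\}\Big\},$$ where $\mathcal{K}_k(a,s,t)=\{K\subseteq[k]:|K|\le s,\ |K\cap[a]|\ge t\}$ and $\mathcal{S}_k(a,s)=\{S\subseteq[k]:|S|\le s,\ [a]\subseteq S\}$.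
   Context: $[p,q]=\{p,\dots,q\}$, $[q]=[1,q]$. Families are cross $t$-intersecting if $|F\cap G|\ge t$ for all $F\in\mathcal{F},G\in\mathcal{G}$. For $\omega:[0,k]\to\mathbb{R}_{\ge0}$, $\omega(F)=\omega(|F|)$ and $\omega(\mathcal{F})=\sum_{F\in\mathcal{F}}\omega(F)$; non-increasing means $\omega(i)\ge\omega(j)$ whenever $i\le j$. *)

(* Defs.v *)
From mathcomp Require Import all_boot all_order all_algebra.
Set Implicit Arguments. Unset Strict Implicit. Unset Printing Implicit Defensive.
Import Order.TTheory GRing.Theory Num.Theory.
Local Open Scope ring_scope.

(* Ground set [k] = {1..k} is modelled by 'I_k (element i stands for i+1);
   so the initial segment [a] is {i : 'I_k | i < a}. *)
Definition seg (k a : nat) : {set 'I_k} := [set i : 'I_k | (i < a)%N].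

Definition cross_tint (k t : nat) (F G : {set {set 'I_k}}) : Prop :=
  forall A B, A \in F -> B \in G -> (t <= #|A :&: B|)%N.

Definition wfam (R : numDomainType) (k : nat) (w : nat -> R)
  (F : {set {set 'I_k}}) : R := \sum_(A in F) w #|A|.

Definition Kfam (k a s t : nat) : {set {set 'I_k}} :=
  [set K : {set 'I_k} | (#|K| <= s)%N && (t <= #|K :&: seg k a|)%N].

Definition Sfam (k a s : nat) : {set {set 'I_k}} :=
  [set S : {set 'I_k} | (#|S| <= s)%N && (seg k a \subset S)].

Definition good_weight (R : realDomainType) (k : nat) (w : nat -> R) : Prop :=
  (forall i, (i <= k)%N -> 0 <= w i) /\
  (forall i j, (i <= j)%N -> (j <= k)%N -> w j <= w i).

(* Main.v *)
Require Import Defs.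
From mathcomp Require Import all_boot all_order all_algebra.
From mathcomp Require Import fingroup perm.
From mathcomp Require Import lra.
Set Implicit Arguments. Unset Strict Implicit. Unset Printing Implicit Defensive.
Import Order.TTheory GRing.Theory Num.Theory.
Local Open Scope ring_scope.

Section Main.
Variable R : realFieldType.
Variable k : nat.
Implicit Types (F G I J : {set {set 'I_k}}) (A B X Y : {set 'I_k}) (w : nat -> R).

Lemma sum_le_cond (T : finType) (P Q : pred T) (f g : T -> R) :
  (forall x, P x -> Q x /\ f x <= g x) -> (forall x, Q x -> 0 <= g x) ->
  \sum_(x | P x) f x <= \sum_(x | Q x) g x.
Proof.
move=> H1 H2; rewrite [X in X <= _]big_mkcond [X in _ <= X]big_mkcond /=.
apply: ler_sum => x _.
case Px: (P x); first by have [-> ] := H1 x Px.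
by case Qx: (Q x) => //; exact: H2.
Qed.

Definition good m w := (forall i, (i <= m)%N -> 0 <= w i) /\ (forall i, (i < m)%N -> w i.+1 <= w i).

Lemma card_seg m : (m <= k)%N -> #|seg k m| = m.
Proof.
move=> hm.
have -> : seg k m = [set widen_ord hm i | i : 'I_m].
  apply/setP => i; rewrite inE; apply/idP/imsetP.
    by move=> him; exists (Ordinal him) => //; apply: val_inj.
  by case=> j _ ->; rewrite /= ltn_ord.
rewrite card_imset ?card_ord //.
by move=> i j /(congr1 val) /= /val_inj.
Qed.

Lemma wfam_sub w F G : {subset F <= G} -> (forall A, A \in G -> 0 <= w #|A|) ->
  wfam w F <= wfam w G.
Proof.
move=> sFG h; apply: sum_le_cond => A AF; first by split; [apply: sFG|].
exact: h.
Qed.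


Definition fam_ok m s F := forall A, A \in F -> (A \subset seg k m) && (#|A| <= s)%N.

Lemma closure m l l' t F G : fam_ok m l F -> fam_ok m l' G -> cross_tint t F G ->
 exists F' G', [/\ {subset F <= F'}, {subset G <= G'}, fam_ok m l F', fam_ok m l' G' &
   cross_tint t F' G'] /\
   (forall A, A \subset seg k m -> (#|A| <= l)%N -> (forall B, B \in G' -> (t <= #|A :&: B|)%N) -> A \in F') /\
   (forall B, B \subset seg k m -> (#|B| <= l')%N -> (forall A, A \in F' -> (t <= #|A :&: B|)%N) -> B \in G').
Proof.
move=> hF hG hc.
pose G' := [set B : {set 'I_k} | (B \subset seg k m) && (#|B| <= l')%N && [forall A in F, (t <= #|A :&: B|)%N]].
pose F' := [set A : {set 'I_k} | (A \subset seg k m) && (#|A| <= l)%N && [forall B in G', (t <= #|A :&: B|)%N]].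
have sGG' : {subset G <= G'}.
  move=> B BG; rewrite inE hG //=; apply/forall_inP => A AF; exact: hc.
have sFF' : {subset F <= F'}.
  move=> A AF; rewrite inE hF //=; apply/forall_inP => B.
  by rewrite inE => /andP [_ /forall_inP]; apply.
exists F', G'; split; [split|split] => //.
- by move=> A; rewrite inE => /andP [].
- by move=> B; rewrite inE => /andP [].
- by move=> A B; rewrite inE => /andP [_ /forall_inP]; apply.
- by move=> A hA hl h; rewrite inE hA hl /=; apply/forall_inP.
- move=> B hB hl h; rewrite inE hB hl /=; apply/forall_inP => A AF.
  exact/h/sFF'.
Qed.

Lemma card_swap A B y z : z \in A -> y \notin A -> y \in B ->
  (#|A :&: B| <= #|((A :\ z) :|: [set y]) :&: B|)%N.
Proof.
move=> zA yA yB.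
rewrite (cardsD1 z (A :&: B)).
have -> : ((A :\ z) :|: [set y]) :&: B = y |: ((A :&: B) :\ z).
  apply/setP => u; rewrite !inE.
  case: (u =P y) => [->|_] /=; first by rewrite yB ?orbT.
  by rewrite ?orbF andbA.
rewrite cardsU1 !inE (negbTE yA) andbF /= leq_add2r.
by case: (_ && _).
Qed.

Lemma degen m l l' t F G : F != set0 -> G != set0 -> fam_ok m l F -> fam_ok m l' G ->
  (forall A, A \subset seg k m -> (#|A| <= l)%N -> (forall B, B \in G -> (t <= #|A :&: B|)%N) -> A \in F) ->
  cross_tint t F G ->
  (exists y, [/\ y \in seg k m, (exists2 A, A \in F & y \notin A) & (exists2 B, B \in G & y \notin B)])
  \/ (forall A, A \in F -> A = seg k m) \/ (forall B, B \in G -> B = seg k m).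
Proof.
move=> nF nG hF hG maxF hc.
have hF' : forall A, A \in F -> A \subset seg k m by move=> A /hF /andP [].
have hG' : forall B, B \in G -> B \subset seg k m by move=> B /hG /andP [].
case: (boolP [forall A in F, seg k m \subset A]) => [/forall_inP hA|].
  by right; left => A AF; apply/eqP; rewrite eqEsubset hF' //= hA.
rewrite negb_forall_in => /exists_inP [A0 A0F] /subsetPn [y ys yA0].
case: (boolP [exists B in G, y \notin B]) => [/exists_inP [B BG yB]|].
  by left; exists y; split => //; [exists A0 | exists B].
rewrite negb_exists_in => /forall_inP yG.
case: (boolP [forall B in G, seg k m \subset B]) => [/forall_inP hB|].
  by right; right => B BG; apply/eqP; rewrite eqEsubset hB // hG'.
rewrite negb_forall_in => /exists_inP [B0 B0G] /subsetPn [z zs zB0].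
case: (boolP [exists A in F, z \notin A]) => [/exists_inP [A AF zA]|].
  by left; exists z; split => //; [exists A | exists B0].
rewrite negb_exists_in => /forall_inP zF.
have zA0 : z \in A0 by have := zF A0 A0F; rewrite negbK.
have A'F : (A0 :\ z) :|: [set y] \in F.
  apply: maxF.
  - rewrite subUset sub1set ys andbT; apply: subset_trans (hF' _ A0F).
    exact: subsetDl.
    rewrite setUC cardsU1 !inE (negbTE yA0) andbF /=.
    by have := hF _ A0F => /andP [_]; rewrite (cardsD1 z A0) zA0.
  - move=> B BG; apply: leq_trans (hc _ _ A0F BG) _.
    by apply: card_swap => //; have := yG B BG; rewrite negbK.
have := zF _ A'F; rewrite !inE eqxx /=.
by case: (z =P y) => // zy; move: yA0; rewrite -zy zA0.
Qed.


Section Swap.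
Variables (y x : 'I_k).
Let tau := tperm y x.
Definition gsw A := [set tau z | z in A].

Lemma mem_gsw A z : (z \in gsw A) = (tau z \in A).
Proof.
apply/imsetP/idP => [[u uA ->]|h]; first by rewrite tpermK.
by exists (tau z) => //; rewrite tpermK.
Qed.

Lemma gswK A : gsw (gsw A) = A.
Proof. by apply/setP => z; rewrite !mem_gsw tpermK. Qed.

Lemma gsw_inj : injective gsw.
Proof. by move=> A B h; rewrite -(gswK A) h gswK. Qed.

Lemma card_gsw A : #|gsw A| = #|A|.
Proof. by rewrite card_imset //; exact: perm_inj. Qed.

Lemma gswI A B : gsw A :&: gsw B = gsw (A :&: B).
Proof. by apply/setP => z; rewrite !inE !mem_gsw inE. Qed.

Lemma gsw_seg m A : y \in seg k m -> x \in seg k m -> A \subset seg k m -> gsw A \subset seg k m.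
Proof.
move=> ys xs sA; apply/subsetP => z; rewrite mem_gsw => /(subsetP sA).
by case: tpermP => [->|->|] // _ _ ->.
Qed.

Definition Fsw F := [set gsw A | A in F].

Lemma mem_Fsw F A : (A \in Fsw F) = (gsw A \in F).
Proof.
apply/imsetP/idP => [[u uA ->]|h]; first by rewrite gswK.
by exists (gsw A) => //; rewrite gswK.
Qed.

Lemma wfam_Fsw w F : wfam w (Fsw F) = wfam w F.
Proof.
rewrite /wfam big_imset; last by move=> A B _ _; exact: gsw_inj.
by apply: eq_bigr => A _; rewrite card_gsw.
Qed.

End Swap.

Lemma swap_step m l l' t F G y x : y \in seg k m -> x \in seg k m ->
  fam_ok m l F -> fam_ok m l' G -> F != set0 -> G != set0 -> cross_tint t F G ->
  (exists2 A, A \in F & y \notin A) -> (exists2 B, B \in G & y \notin B) ->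
  exists F2 G2, [/\ fam_ok m l F2, fam_ok m l' G2, F2 != set0, G2 != set0 & cross_tint t F2 G2]
   /\ [/\ (exists2 A, A \in F2 & x \notin A), (exists2 B, B \in G2 & x \notin B) &
      forall w1 w2, wfam w1 F2 + wfam w2 G2 = wfam w1 F + wfam w2 G].
Proof.
move=> ys xs hF hG nF nG hc [A0 A0F yA0] [B0 B0G yB0].
have ok : forall s H, fam_ok m s H -> fam_ok m s (Fsw y x H).
  move=> s H hH A; rewrite mem_Fsw => /hH /andP [h1 h2].
  by rewrite -(card_gsw y x) h2 andbT -(gswK y x A) gsw_seg.
have ne : forall H, H != set0 -> Fsw y x H != set0.
  move=> H /set0Pn [A AH]; apply/set0Pn; exists (gsw y x A).
  by rewrite mem_Fsw gswK.
have nx : forall A, y \notin A -> x \notin gsw y x A.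
  by move=> A yA; rewrite mem_gsw tpermR.
exists (Fsw y x F), (Fsw y x G); split; split.
- exact: ok.
- exact: ok.
- exact: ne.
- exact: ne.
- by move=> A B; rewrite !mem_Fsw => /hc h /h; rewrite gswI card_gsw.
- by exists (gsw y x A0); [rewrite mem_Fsw gswK | exact: nx].
- by exists (gsw y x B0); [rewrite mem_Fsw gswK | exact: nx].
- by move=> w1 w2; rewrite !wfam_Fsw.
Qed.


Lemma card_le_m m A : (m <= k)%N -> A \subset seg k m -> (#|A| <= m)%N.
Proof. by move=> hm sA; rewrite -(card_seg hm); exact: subset_leq_card. Qed.

Lemma wfam_disjU w F I : (forall A, A \in I -> A \notin F) ->
  wfam w (F :|: I) = wfam w F + wfam w I.
Proof.
move=> hd; rewrite /wfam (big_setID F); congr (_ + _); apply: eq_bigl => A.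
  by rewrite !inE; case: (A \in F); rewrite ?orbT ?andbF.
rewrite !inE; case AI: (A \in I); last by rewrite orbF andNb.
by rewrite (negbTE (hd _ AI)).
Qed.

Lemma wfam_subD w G (G1 : {set {set 'I_k}}) : {subset G1 <= G} -> wfam w G = wfam w (G :\: G1) + wfam w G1.
Proof.
move=> sG; rewrite /wfam (big_setID G1) addrC; congr (_ + _); apply: eq_bigl => A.
by rewrite !inE; case AG1: (A \in G1); rewrite ?andbT ?andbF // sG.
Qed.

Lemma add_side m s w (x : 'I_k) F (F1 : {set {set 'I_k}}) : (m <= k)%N -> good m w -> fam_ok m s F ->
  {subset F1 <= F} -> (forall A, A \in F1 -> x \in A) ->
  (forall A, A \in F1 -> A :\ x \notin F) ->
  wfam w F + wfam w F1 <= wfam w (F :|: [set A :\ x | A in F1]).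
Proof.
move=> hm [_ hw] hF sF1 xF1 nF.
rewrite wfam_disjU; last by move=> B /imsetP [A AF1 ->]; exact: nF.
rewrite lerD2l /wfam big_imset; last first.
  move=> A B AF1 BF1 /= h.
  by rewrite -(setD1K (xF1 _ AF1)) h setD1K // xF1.
apply: ler_sum => A AF1.
have hA : #|A| = (#|A :\ x|).+1 by rewrite (cardsD1 x A) xF1.
rewrite hA; apply: hw; rewrite -ltnS -hA ltnS.
apply: card_le_m => //; have /andP [] := hF _ (sF1 _ AF1).
by [].
Qed.


Lemma setD1Il A B (x : 'I_k) : (A :\ x) :&: B = (A :&: B) :\ x.
Proof. by apply/setP => z; rewrite !inE andbA. Qed.

Lemma setD1Ir A B (x : 'I_k) : A :&: (B :\ x) = (A :&: B) :\ x.
Proof. by apply/setP => z; rewrite !inE andbCA andbA. Qed.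

Lemma setD1D1 A (x : 'I_k) : (A :\ x) :\ x = A :\ x.
Proof. by apply/setP => z; rewrite !inE andbA andbb. Qed.

Lemma fam_ok_D1 m s (x : 'I_k) F A : fam_ok m s F -> A \in F ->
  (A :\ x \subset seg k m) && (#|A :\ x| <= s)%N.
Proof.
move=> hF /hF /andP [h1 h2]; rewrite (subset_trans _ h1) ?subsetDl //=.
by apply: leq_trans h2; apply: subset_leq_card; exact: subsetDl.
Qed.

Lemma option_step m l l' t w1 w2 (x : 'I_k) F G : (m <= k)%N -> good m w1 -> good m w2 ->
  fam_ok m l F -> fam_ok m l' G -> cross_tint t F G ->
  (exists2 A, A \in F & x \notin A) -> (exists2 B, B \in G & x \notin B) ->
  exists F3 G3, [/\ fam_ok m l F3, fam_ok m l' G3, F3 != set0, G3 != set0 &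
    (forall A B, A \in F3 -> B \in G3 -> (t <= #|(A :&: B) :\ x|)%N)] /\
    wfam w1 F + wfam w2 G <= wfam w1 F3 + wfam w2 G3.
Proof.
move=> hm g1 g2 hF hG hc [A0 A0F xA0] [B0 B0G xB0].
pose crit A B := (x \in A) && (x \in B) && (#|A :&: B| == t).
have key : forall A B, A \in F -> B \in G -> ~~ crit A B -> (t <= #|(A :&: B) :\ x|)%N.
  move=> A B AF BG; have := hc A B AF BG; rewrite /crit (cardsD1 x (A :&: B)) inE.
  case: (x \in A); case: (x \in B) => //= h ne.
  have : (t < 1 + #|A :&: B :\ x|)%N by rewrite ltn_neqAle eq_sym ne h.
  by rewrite add1n ltnS.
have critlt : forall A B, crit A B -> (#|(A :&: B) :\ x| < t)%N.
  move=> A B /andP [/andP [xA xB] /eqP <-].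
  by rewrite (cardsD1 x (A :&: B)) inE xA xB.
pose F1 := [set A in F | [exists B in G, crit A B]].
pose G1 := [set B in G | [exists A in F, crit A B]].
have sF1 : {subset F1 <= F} by move=> A; rewrite inE => /andP [].
have sG1 : {subset G1 <= G} by move=> A; rewrite inE => /andP [].
have xF1 : forall A, A \in F1 -> x \in A.
  by move=> A; rewrite inE => /andP [_ /exists_inP [B _ /andP [/andP []]]].
have xG1 : forall B, B \in G1 -> x \in B.
  by move=> B; rewrite inE => /andP [_ /exists_inP [A _ /andP [/andP []]]].
have nF1 : forall A, A \in F1 -> A :\ x \notin F.
  move=> A; rewrite inE => /andP [_ /exists_inP [B BG cAB]]; apply/negP => AF.
  have := hc _ _ AF BG; rewrite setD1Il; have := critlt _ _ cAB.
  by rewrite ltnNge => /negbTE ->.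
have nG1 : forall B, B \in G1 -> B :\ x \notin G.
  move=> B; rewrite inE => /andP [_ /exists_inP [A AF cAB]]; apply/negP => BG.
  have := hc _ _ AF BG; rewrite setD1Ir; have := critlt _ _ cAB.
  by rewrite ltnNge => /negbTE ->.
case: (lerP (wfam w2 G1) (wfam w1 F1)) => hcmp.
- exists (F :|: [set A :\ x | A in F1]), (G :\: G1); split; last first.
    have := add_side hm g1 hF sF1 xF1 nF1.
    rewrite (wfam_subD w2 sG1) => h; lra.
  split.
  + move=> A; rewrite inE => /orP [/hF //|/imsetP [A1 A1F1 ->]].
    exact: fam_ok_D1 hF (sF1 _ A1F1).
  + by move=> B; rewrite inE => /andP [_ /hG].
  + by apply/set0Pn; exists A0; rewrite inE A0F.
  + apply/set0Pn; exists B0; rewrite inE B0G andbT.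
    by apply/negP => /xG1; rewrite (negbTE xB0).
  + move=> A B; rewrite !inE => /orP [AF|/imsetP [A1 A1F1 ->]] /andP [nBG1 BG].
      apply: key => //; apply: (contra _ nBG1) => cAB.
      by rewrite BG; apply/exists_inP; exists A.
    rewrite setD1Il setD1D1; apply: key => //; first exact: sF1.
    apply: (contra _ nBG1) => cAB.
    by rewrite BG; apply/exists_inP; exists A1 => //; exact: sF1.
- exists (F :\: F1), (G :|: [set B :\ x | B in G1]); split; last first.
    have := add_side hm g2 hG sG1 xG1 nG1.
    rewrite (wfam_subD w1 sF1) => h; lra.
  split.
  + by move=> A; rewrite inE => /andP [_ /hF].
  + move=> B; rewrite inE => /orP [/hG //|/imsetP [B1 B1G1 ->]].
    exact: fam_ok_D1 hG (sG1 _ B1G1).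
  + apply/set0Pn; exists A0; rewrite inE A0F andbT.
    by apply/negP => /xF1; rewrite (negbTE xA0).
  + by apply/set0Pn; exists B0; rewrite inE B0G.
  + move=> A B; rewrite !inE => /andP [nAF1 AF] /orP [BG|/imsetP [B1 B1G1 ->]].
      apply: key => //; apply: (contra _ nAF1) => cAB.
      by rewrite AF; apply/exists_inP; exists B.
    rewrite setD1Ir setD1D1; apply: key => //; first exact: sG1.
    apply: (contra _ nAF1) => cAB.
    by rewrite AF; apply/exists_inP; exists B1 => //; exact: sG1.
Qed.


Lemma wfam_split w (x : 'I_k) P : wfam w P =
  \sum_(A in P | x \notin A) w #|A| + \sum_(X : {set 'I_k} | (x \notin X) && ((x |: X) \in P)) w (#|X|.+1).
Proof.
rewrite /wfam (bigID (fun A => x \notin A)) /=; congr (_ + _).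
rewrite (reindex_onto (fun X => x |: X) (fun A => A :\ x)); last first.
  by move=> A /andP [_]; rewrite negbK => xA; rewrite setD1K.
apply: eq_big => X.
  rewrite setU11 andbT andbC; case xX: (x \in X) => /=.
    by apply/negbTE; apply/negP => /andP [/eqP h _]; have := setD11 x (x |: X); rewrite h xX.
  by rewrite setU1K ?xX // eqxx.
move=> /andP [_ /eqP h]; have xX : x \notin X by rewrite -h setD11.
by rewrite cardsU1 xX.
Qed.

Definition W s w i := w i + (if (i < s)%N then w i.+1 else 0).

Lemma good_W m s w : good m.+1 w -> good m (W s w).
Proof.
move=> [h0 h1]; split.
  move=> i hi; rewrite /W addr_ge0 ?h0 ?(leq_trans hi) //.
  by case: ifP => // _; rewrite h0.
move=> i hi; rewrite /W; apply: lerD; first exact: h1 (ltn_trans hi (ltnSn _)).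
case: (ltnP i.+1 s) => h.
  by rewrite ifT ?h1 // (ltn_trans (ltnSn i) h).
by case: ifP => // _; rewrite h0 // (ltn_trans hi (ltnSn _)).
Qed.

Lemma seg_sub_S m (x : 'I_k) X : nat_of_ord x = m ->
  (X \subset seg k m) = (X \subset seg k m.+1) && (x \notin X).
Proof.
move=> hx; apply/idP/andP => [h|[h1 h2]].
  split; first by apply: subset_trans h _; apply/subsetP => z; rewrite !inE => /ltnW.
  by apply/negP => /(subsetP h); rewrite inE hx ltnn.
apply/subsetP => z zX; have := subsetP h1 z zX; rewrite !inE ltnS leq_eqVlt => /orP [|//].
move=> /eqP hz; have zx : z = x by apply: val_inj; rewrite /= hz hx.
by move: h2; rewrite -zx zX.
Qed.

Lemma xseg m (x : 'I_k) : nat_of_ord x = m -> x \in seg k m.+1.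
Proof. by move=> hx; rewrite inE hx. Qed.

Lemma xnseg m a (x : 'I_k) : nat_of_ord x = m -> (a <= m)%N -> x \notin seg k a.
Proof. by move=> hx ha; rewrite inE hx -leqNgt. Qed.


Lemma trace_fam m s w (x : 'I_k) F : nat_of_ord x = m -> good m.+1 w -> fam_ok m.+1 s F ->
  [/\ fam_ok m s [set A :\ x | A in F],
      (F != set0 -> [set A :\ x | A in F] != set0) &
      wfam w F <= wfam (W s w) [set A :\ x | A in F]].
Proof.
move=> hx [h0 _] hF; split.
- move=> X /imsetP [A AF ->]; have /andP [h1 h2] := fam_ok_D1 x hF AF.
  rewrite (seg_sub_S _ hx) h1 setD11 /=; exact: h2.
- by case/set0Pn => A AF; apply/set0Pn; exists (A :\ x); apply: imset_f.
have hm : (m <= k)%N by rewrite -hx ltnW.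
have nn : forall X, X \in [set A :\ x | A in F] -> (#|X| <= m)%N.
  move=> X /imsetP [A AF ->]; have /andP [h1 _] := fam_ok_D1 x hF AF.
  apply: card_le_m => //; rewrite (seg_sub_S _ hx) h1 setD11.
  by [].
rewrite (wfam_split w x F) /wfam /W big_split /=; apply: lerD.
  apply: sum_le_cond => [A /andP [AF xA]|X XT]; last by rewrite h0 // (leq_trans (nn _ XT)).
  split => //; apply/imsetP; exists A => //.
  by apply/setP => z; rewrite !inE; case: eqP => // ->; rewrite (negbTE xA).
apply: sum_le_cond => [X /andP [xX XF]|X XT]; last first.
  by case: ifP => // _; rewrite h0 // ltnS (nn _ XT).
split; first by apply/imsetP; exists (x |: X) => //; rewrite setU1K.
have /andP [_ h2] := hF _ XF; move: h2; rewrite cardsU1 xX add1n => h2.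
by rewrite h2.
Qed.



Definition Km m a s t := [set K : {set 'I_k} | (K \subset seg k m) && (#|K| <= s)%N && (t <= #|K :&: seg k a|)%N].
Definition Sm m a s := [set S : {set 'I_k} | (S \subset seg k m) && (#|S| <= s)%N && (seg k a \subset S)].

Lemma cardU1I (x : 'I_k) X (S : {set 'I_k}) : x \notin S -> #|(x |: X) :&: S| = #|X :&: S|.
Proof.
move=> xS; apply: eq_card => z; rewrite !inE.
by case: (z =P x) => [->|] //=; rewrite (negbTE xS) !andbF.
Qed.

Lemma subU1 (x : 'I_k) X (S : {set 'I_k}) : x \notin S -> (S \subset x |: X) = (S \subset X).
Proof.
move=> xS; apply/subsetP/subsetP => h z zS; last by rewrite inE h ?orbT.
have := h z zS; rewrite !inE; case: (z =P x) => [zx _|_ //].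
by move: xS; rewrite -zx zS.
Qed.

Lemma K_split m a s t w (x : 'I_k) : nat_of_ord x = m -> (a <= m)%N ->
  wfam w (Km m.+1 a s t) = wfam (W s w) (Km m a s t).
Proof.
move=> hx ha; rewrite (wfam_split w x) /wfam /W big_split /=; congr (_ + _).
  apply: eq_bigl => A; rewrite !inE (seg_sub_S _ hx).
  by case: (A \subset _); case: (x \in A); case: (_ <= _)%N; case: (_ <= _)%N.
rewrite big_mkcond [RHS]big_mkcond /=; apply: eq_bigr => X _.
rewrite !inE (seg_sub_S _ hx); case xX: (x \in X) => /=; first by rewrite andbF.
rewrite subUset sub1set (xseg hx) cardsU1 xX (cardU1I _ (xnseg hx ha)) add1n /=.
case hs: (#|X| < s)%N; first by rewrite (ltnW hs) !andbT.
by rewrite !andbF /=; case: ifP.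
Qed.

Lemma S_split m a s w (x : 'I_k) : nat_of_ord x = m -> (a <= m)%N ->
  wfam w (Sm m.+1 a s) = wfam (W s w) (Sm m a s).
Proof.
move=> hx ha; rewrite (wfam_split w x) /wfam /W big_split /=; congr (_ + _).
  apply: eq_bigl => A; rewrite !inE (seg_sub_S _ hx).
  by case: (A \subset _); case: (x \in A); case: (_ <= _)%N; case: (_ \subset _).
rewrite big_mkcond [RHS]big_mkcond /=; apply: eq_bigr => X _.
rewrite !inE (seg_sub_S _ hx); case xX: (x \in X) => /=; first by rewrite andbF.
rewrite subUset sub1set (xseg hx) cardsU1 xX (subU1 _ (xnseg hx ha)) add1n /=.
case hs: (#|X| < s)%N; first by rewrite (ltnW hs) !andbT.
by rewrite !andbF /=; case: ifP.
Qed.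


Definition RHS m l l' t w1 w2 :=
  Num.max
    (\big[Num.max/0]_(t <= a < (minn l' m).+1)
        (wfam w1 (Km m a l t) + wfam w2 (Sm m a l')))
    (\big[Num.max/0]_(t <= a < (minn l m).+1)
        (wfam w1 (Sm m a l) + wfam w2 (Km m a l' t))).

Lemma bigmax_ge0 (r : seq nat) (f : nat -> R) : 0 <= \big[Num.max/0]_(i <- r) f i.
Proof.
elim: r => [|a r IH]; first by rewrite big_nil.
by rewrite big_cons le_max IH orbT.
Qed.

Lemma term_le (r : seq nat) (f : nat -> R) a : a \in r -> f a <= \big[Num.max/0]_(i <- r) f i.
Proof. by move=> ar; apply: (le_bigmax_seq _ _ xpredT f ar). Qed.

Lemma transfer m l l' t w1 w2 (x : 'I_k) : nat_of_ord x = m ->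
  RHS m l l' t (W l w1) (W l' w2) <= RHS m.+1 l l' t w1 w2.
Proof.
move=> hx; rewrite /RHS ge_max; apply/andP; split; rewrite le_max; apply/orP; [left|right];
  rewrite big_seq_cond; apply: bigmax_le; rewrite ?bigmax_ge0 // => a;
  rewrite andbT mem_index_iota => /andP [ta]; rewrite ltnS leq_min => /andP [al am].
- rewrite -(@K_split m a l t w1 x hx am) -(@S_split m a l' w2 x hx am); apply: term_le.
  by rewrite mem_index_iota ta ltnS leq_min al (leq_trans am).
- rewrite -(@S_split m a l w1 x hx am) -(@K_split m a l' t w2 x hx am); apply: term_le.
  by rewrite mem_index_iota ta ltnS leq_min al (leq_trans am).
Qed.

Lemma deg_pair (m s s' t : nat) w w' (P Q : {set {set 'I_k}}) : (m <= k)%N -> good m w' ->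
  (forall B, B \in P -> B = seg k m) -> P != set0 -> fam_ok m s P ->
  fam_ok m s' Q -> Q != set0 -> (forall A, A \in Q -> (t <= #|A :&: seg k m|)%N) ->
  [/\ (t <= m)%N, (m <= s)%N, wfam w P = wfam w (Sm m m s) & wfam w' Q <= wfam w' (Km m m s' t)].
Proof.
move=> hm [h0 _] hP nP hPo hQo nQ hQ.
have [B0 B0P] := set0Pn _ nP.
have ms : (m <= s)%N by have /andP [_] := hPo _ B0P; rewrite (hP _ B0P) card_seg.
have [A0 A0Q] := set0Pn _ nQ.
split => //.
- apply: leq_trans (hQ _ A0Q) _; rewrite -{2}(card_seg hm); apply: subset_leq_card.
  exact: subsetIr.
- congr wfam; apply/setP => S; rewrite inE; apply/idP/idP => [SP|].
    by rewrite (hP _ SP) subxx card_seg ?ms.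
  move=> /andP [/andP [h1 _] h2]; have -> : S = seg k m by apply/eqP; rewrite eqEsubset h1.
  by rewrite -(hP _ B0P).
- apply: wfam_sub => [A AQ|K]; last first.
    by rewrite inE => /andP [/andP [h1 _] _]; apply: h0; apply: card_le_m.
  by rewrite inE hQ // andbT; apply: hQo.
Qed.


Lemma value_mono m l l' w1 w2 F G F' G' : (m <= k)%N -> good m w1 -> good m w2 ->
  fam_ok m l F' -> fam_ok m l' G' -> {subset F <= F'} -> {subset G <= G'} ->
  wfam w1 F + wfam w2 G <= wfam w1 F' + wfam w2 G'.
Proof.
move=> hm [h1 _] [h2 _] hF hG sF sG; apply: lerD; apply: wfam_sub => // A.
  by move=> /hF /andP [h _]; apply: h1; apply: card_le_m.
by move=> /hG /andP [h _]; apply: h2; apply: card_le_m.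
Qed.

Lemma ne_sub F F' : {subset F <= F'} -> F != set0 -> F' != set0.
Proof. by move=> s /set0Pn [A AF]; apply/set0Pn; exists A; apply: s. Qed.

Lemma mainL l l' t : (0 < t)%N -> forall m, (m <= k)%N -> forall w1 w2 F G,
  good m w1 -> good m w2 -> fam_ok m l F -> fam_ok m l' G -> F != set0 -> G != set0 ->
  cross_tint t F G -> wfam w1 F + wfam w2 G <= RHS m l l' t w1 w2.
Proof.
move=> ht; elim => [|m IH] hm w1 w2 F G g1 g2 hF hG nF nG hc.
  have [A AF] := set0Pn _ nF; have [B BG] := set0Pn _ nG.
  have := hc _ _ AF BG; have /andP [h1 _] := hF _ AF.
  have := card_le_m hm h1; rewrite leqn0 => /eqP A0.
  have : (#|A :&: B| <= #|A|)%N by apply: subset_leq_card; exact: subsetIl.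
  by rewrite A0 leqn0 => /eqP ->; rewrite leqNgt ht.
have [F' [G' [[sF sG hF' hG' hc'] [maxF maxG]]]] := closure hF hG hc.
apply: le_trans (value_mono hm g1 g2 hF' hG' sF sG) _.
have nF' := ne_sub sF nF; have nG' := ne_sub sG nG.
have [[y [ys ex1 ex2]]|[hFs|hGs]] := degen nF' nG' hF' hG' maxF hc'.
- pose x := Ordinal hm; have hx : nat_of_ord x = m by [].
  have [F2 [G2 [[hF2 hG2 nF2 nG2 hc2] [exF exG hval]]]] :=
    swap_step ys (xseg hx) hF' hG' nF' nG' hc' ex1 ex2.
  rewrite -hval.
  have [F3 [G3 [[hF3 hG3 nF3 nG3 hc3] hv3]]] := option_step hm g1 g2 hF2 hG2 hc2 exF exG.
  apply: le_trans hv3 _.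
  have [tF1 tF2 tF3] := trace_fam hx g1 hF3.
  have [tG1 tG2 tG3] := trace_fam hx g2 hG3.
  apply: le_trans (lerD tF3 tG3) _.
  apply: le_trans (transfer l l' t w1 w2 hx).
  apply: IH => //; first exact: ltnW.
  + exact: good_W.
  + exact: good_W.
  + exact: tF2.
  + exact: tG2.
  + move=> X Y /imsetP [A AF ->] /imsetP [B BG ->].
    by rewrite setD1Il setD1Ir setD1D1; apply: hc3.
- have segF : seg k m.+1 \in F'.
    by have [A0 A0F] := set0Pn _ nF'; rewrite -(hFs _ A0F).
  have [tm ml hP hQ] := deg_pair w1 hm g2 hFs nF' hF' hG' nG'
     (fun B BG => ltac:(rewrite setIC; exact: hc' _ _ segF BG)).
  rewrite hP; apply: le_trans; first exact: (lerD (lexx _) hQ).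
  rewrite /RHS le_max; apply/orP; right; apply: term_le.
  by rewrite mem_index_iota tm ltnS leq_min ml leqnn.
- have segG : seg k m.+1 \in G'.
    by have [B0 B0G] := set0Pn _ nG'; rewrite -(hGs _ B0G).
  have [tm ml hP hQ] := deg_pair w2 hm g1 hGs nG' hG' hF' nF'
     (fun A AF => hc' _ _ AF segG).
  rewrite hP; apply: le_trans; first exact: (lerD hQ (lexx _)).
  rewrite /RHS le_max; apply/orP; left; apply: term_le.
  by rewrite mem_index_iota tm ltnS leq_min ml leqnn.
Qed.

End Main.

Unset Implicit Arguments.

Theorem theorem3p6 (R : realFieldType) (k l l' t : nat)
  (F G : {set {set 'I_k}}) (w1 w2 : nat -> R) :
  (1 <= t)%N -> (t <= l')%N -> (l' <= l)%N -> (l <= k)%N ->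
  (forall A, A \in F -> #|A| <= l)%N ->
  (forall B, B \in G -> #|B| <= l')%N ->
  F != set0 -> G != set0 ->
  cross_tint t F G ->
  good_weight k w1 -> good_weight k w2 ->
  wfam w1 F + wfam w2 G <=
  Num.max
    (\big[Num.max/0]_(t <= a < l'.+1)
        (wfam w1 (Kfam k a l t) + wfam w2 (Sfam k a l')))
    (\big[Num.max/0]_(t <= a < l.+1)
        (wfam w1 (Sfam k a l) + wfam w2 (Kfam k a l' t))).
Proof.
move=> ht htl hll hlk hF hG nF nG hc [a1 b1] [a2 b2].
have subK : forall K : {set 'I_k}, K \subset seg k k.
  by move=> K; apply/subsetP => i _; rewrite inE ltn_ord.
have gd : forall w : nat -> R, (forall i, (i <= k)%N -> 0 <= w i) ->
    (forall i j, (i <= j)%N -> (j <= k)%N -> w j <= w i) -> good k w.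
  by move=> w h1 h2; split => // i hi; apply: h2.
have H := @mainL R k l l' t ht k (leqnn k) w1 w2 F G (gd _ a1 b1) (gd _ a2 b2)
  (fun A AF => ltac:(rewrite subK; exact: hF)) (fun B BG => ltac:(rewrite subK; exact: hG))
  nF nG hc.
apply: le_trans H _; rewrite /RHS (minn_idPl (leq_trans hll hlk)) (minn_idPl hlk).
have eK : forall a s t', Km k k a s t' = Kfam k a s t'.
  by move=> a s t'; apply/setP => K; rewrite !inE subK.
have eS : forall a s, Sm k k a s = Sfam k a s.
  by move=> a s; apply/setP => K; rewrite !inE subK.
rewrite le_eqVlt; apply/orP; left; apply/eqP; congr Num.max; apply: eq_bigr => a _; by rewrite eK eS.
Qed.
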